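(* For a ring $R$, the following are equivalent: (1) $R$ is a DT ring; (2) $R$ is a semi-tripotent ring; (3) for every $a\in R$ there exist an idempotent $e\in R$ and $j\in J(R)$ such that $a^2=e+j$.
   Context: All rings are associative with identity. $J(R)$ is the Jacobson radical, $U(R)$ the group of units. $\Delta(R)=\{x\in R: x+u\in U(R)\text{ for all }u\in U(R)\}$. $\mathrm{Tr}(R)=\{x\in R: x^3=x\}$. A ring $R$ is a DT ring if every $r\in R$ can be written $r=e+d$ with $e\in\mathrm{Tr}(R)$ and $d\in\Delta(R)$. A ring $R$ is semi-tripotent if every $r\in R$ can be written $r=e+j$ with $e\in\mathrm{Tr}(R)$ and $j\in J(R)$. *)

(* Defs.v *)
From mathcomp Require Import all_boot all_algebra.
Set Implicit Arguments. Unset Strict Implicit. Unset Printing Implicit Defensive.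
Import GRing.Theory.
Local Open Scope ring_scope.

(* Rings: MathComp [pzRingType] (associative, with identity; zero ring allowed). *)

Definition is_unit (R : pzRingType) (x : R) : Prop :=
  exists y : R, x * y = 1 /\ y * x = 1.

(* J(R): the Jacobson radical, via the standard characterization
   x \in J(R) <-> 1 - r x is a unit for every r \in R. *)
Definition in_jacobson (R : pzRingType) (x : R) : Prop :=
  forall r : R, is_unit (1 - r * x).

Definition in_Delta (R : pzRingType) (x : R) : Prop :=
  forall u : R, is_unit u -> is_unit (x + u).

Definition tripotent (R : pzRingType) (x : R) : Prop := x ^+ 3 = x.

Definition idempotent (R : pzRingType) (x : R) : Prop := x * x = x.

Definition DT_ring (R : pzRingType) : Prop :=
  forall r : R, exists e d : R, tripotent e /\ in_Delta d /\ r = e + d.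

Definition semi_tripotent (R : pzRingType) : Prop :=
  forall r : R, exists e j : R, tripotent e /\ in_jacobson j /\ r = e + j.

Definition sq_idem_plus_J (R : pzRingType) : Prop :=
  forall a : R, exists e j : R, idempotent e /\ in_jacobson j /\ a ^+ 2 = e + j.

(* Main.v *)
Require Import Defs.
From HB Require Import structures.
From mathcomp Require Import all_boot all_algebra.
From mathcomp Require Import ring.
From Stdlib Require Import ClassicalEpsilon.
Set Implicit Arguments. Unset Strict Implicit. Unset Printing Implicit Defensive.
Import GRing.Theory.
Local Open Scope ring_scope.
Local Open Scope quotient_scope.
Lemma zH (V : zmodType) (o p q r : V) : (o - p) - (q - r) = (o - (q + p)) + r.
Proof. by rewrite opprB opprD !addrA [LHS]addrAC [o - p - q]addrAC. Qed.

Section Jac.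
Variable R : pzRingType.
Implicit Types x y u v r s d a b w g e : R.

Lemma unit1 : is_unit (1 : R). Proof. by exists 1; rewrite mulr1. Qed.

Lemma unitM u v : is_unit u -> is_unit v -> is_unit (u * v).
Proof.
move=> [u' [h1 h2]] [v' [h3 h4]]; exists (v' * u'); split.
  by rewrite -mulrA (mulrA v) h3 mul1r h1.
by rewrite -mulrA (mulrA u') h2 mul1r h4.
Qed.
Arguments unitM [u v].

Lemma jacobson_swap (a b : R) : is_unit (1 - a * b) -> is_unit (1 - b * a).
Proof.
move=> [v [h1 h2]].
move: h1 h2; rewrite mulrBl mulrBr mul1r mulr1; move=> h1 h2.
have e1 : a * b * v = v - 1 by rewrite -h1 opprB addrC subrK.
have e2 : v * a * b = v - 1 by rewrite -mulrA -h2 opprB addrC subrK.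
exists (1 + b * v * a); split.
  rewrite mulrDr mulr1 mulrBl mul1r.
  have -> : b * a * (b * v * a) = b * v * a - b * a.
    have -> : b * a * (b * v * a) = b * (a * b * v) * a by rewrite !mulrA.
    by rewrite e1 mulrBr mulrBl mulr1.
  by rewrite opprB [b * v * a + _]addrCA subrr addr0 subrK.
rewrite mulrBr mulr1 mulrDl mul1r.
have -> : b * v * a * (b * a) = b * v * a - b * a.
  have -> : b * v * a * (b * a) = b * (v * a * b) * a by rewrite !mulrA.
  by rewrite e2 mulrBr mulrBl mulr1.
by rewrite [b * a + _]addrCA subrr addr0 addrK.
Qed.

Lemma jac0 : in_jacobson (0 : R).
Proof. by move=> r; rewrite mulr0 subr0; exact: unit1. Qed.

Lemma jacMl s x : in_jacobson x -> in_jacobson (s * x).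
Proof. by move=> h r; rewrite mulrA. Qed.

Lemma jacMr x s : in_jacobson x -> in_jacobson (x * s).
Proof.
move=> h r; rewrite mulrA; apply: jacobson_swap; rewrite mulrA; exact: h.
Qed.

Lemma jacN x : in_jacobson x -> in_jacobson (- x).
Proof. by move=> h r; rewrite mulrN -mulNr. Qed.
Arguments jacN [x].

Lemma unit_plus_jac u (j : R) : is_unit u -> in_jacobson j -> is_unit (u + j).
Proof.
move=> hu hj; have [u' [h1 h2]] := hu.
have -> : u + j = u * (1 - (- u') * j).
  by rewrite mulNr opprK mulrDr mulr1 mulrA h1 mul1r.
exact: unitM hu (hj _).
Qed.
Arguments unit_plus_jac [u j].

Lemma jacD x y : in_jacobson x -> in_jacobson y -> in_jacobson (x + y).
Proof.
move=> hx hy r; rewrite mulrDr opprD addrA.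
by apply: unit_plus_jac; [exact: hx | exact: jacN (jacMl r hy)].
Qed.
Arguments jacD [x y].

Lemma jacB x y : in_jacobson x -> in_jacobson y -> in_jacobson (x - y).
Proof. by move=> hx hy; apply: jacD hx (jacN hy). Qed.
Arguments jacB [x y].

Lemma jac_Delta (j : R) : in_jacobson j -> in_Delta j.
Proof. by move=> hj u hu; rewrite addrC; exact: unit_plus_jac. Qed.
Arguments jac_Delta [j].

Lemma unit_of_prods u w : is_unit (u * w) -> is_unit (w * u) -> is_unit u.
Proof.
move=> [t [h1 h2]] [s [h3 h4]].
have e : s * w = w * t.
  by rewrite -[s * w]mulr1 -h1 !mulrA -(mulrA s) h4 mul1r.
exists (w * t); split; first by rewrite mulrA.
by rewrite -e -mulrA h4.
Qed.
Arguments unit_of_prods [u w].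

Lemma idem_jac0 (e : R) : e * e = e -> in_jacobson e -> e = 0.
Proof.
move=> he hj; have [y [h1 h2]] := hj 1.
rewrite mul1r in h1.
by rewrite -[e]mulr1 -h1 mulrA mulrBr mulr1 he subrr mul0r.
Qed.
Arguments idem_jac0 [e].

Lemma unitN u : is_unit u -> is_unit (- u).
Proof. by move=> [v [h1 h2]]; exists (- v); rewrite mulrNN h1 mulrNN h2. Qed.
Arguments unitN [u].

Lemma unitV u v : u * v = 1 -> v * u = 1 -> is_unit v.
Proof. by move=> h1 h2; exists u. Qed.

Lemma DeltaN d : in_Delta d -> in_Delta (- d).
Proof.
move=> hd u hu; have := hd _ (unitN hu) => /unitN.
by rewrite opprD opprK.
Qed.
Arguments DeltaN [d].

Lemma DeltaD a b : in_Delta a -> in_Delta b -> in_Delta (a + b).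
Proof. by move=> ha hb u hu; rewrite -addrA; apply: ha; apply: hb. Qed.
Arguments DeltaD [a b].

Lemma DeltaB a b : in_Delta a -> in_Delta b -> in_Delta (a - b).
Proof. by move=> ha hb; apply: DeltaD ha (DeltaN hb). Qed.
Arguments DeltaB [a b].

Lemma Delta_unit u d : is_unit u -> in_Delta d -> is_unit (u + d).
Proof. by move=> hu hd; rewrite addrC; apply: hd. Qed.
Arguments Delta_unit [u d].

Lemma Delta_unitl w d : is_unit w -> in_Delta d -> in_Delta (w * d).
Proof.
move=> hw hd v hv; have [w' [h1 h2]] := hw.
have -> : w * d + v = w * (d + w' * v) by rewrite mulrDr mulrA h1 mul1r.
apply: unitM hw _; apply: hd; apply: unitM _ hv; exact: unitV h1 h2.
Qed.
Arguments Delta_unitl [w d].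

Lemma Delta_unitr w d : is_unit w -> in_Delta d -> in_Delta (d * w).
Proof.
move=> hw hd v hv; have [w' [h1 h2]] := hw.
have -> : d * w + v = (d + v * w') * w by rewrite mulrDl -mulrA h2 mulr1.
apply: unitM _ hw; apply: hd. apply: unitM hv _. exact: unitV h1 h2.
Qed.
Arguments Delta_unitr [w d].

Lemma Delta1B d : in_Delta d -> is_unit (1 - d).
Proof. by move=> hd; apply: Delta_unit unit1 (DeltaN hd). Qed.
Arguments Delta1B [d].

Lemma DeltaM a b : in_Delta a -> in_Delta b -> in_Delta (a * b).
Proof.
move=> ha hb u hu; have [u' [h1 h2]] := hu.
have hu' : is_unit u' by exact: unitV h1 h2.
have -> : a * b + u = (1 + (a + - (a * (1 - b * u')))) * u.
  have e : a + - (a * (1 - b * u')) = a * b * u'.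
    by rewrite mulrBr mulr1 opprB addrC subrK mulrA.
  by rewrite e mulrDl mul1r -!mulrA h2 mulr1 addrC.
apply: unitM _ hu; rewrite addrA; apply: Delta_unit; first by rewrite addrC; exact: ha _ unit1.
apply: DeltaN; apply: Delta_unitr ha.
apply: Delta1B; exact: Delta_unitr hu' hb.
Qed.

Lemma unit_sq0 (n : R) : n * n = 0 -> is_unit (1 + n).
Proof.
move=> hn; exists (1 - n); split.
  by rewrite mulrDl mul1r mulrBr mulr1 hn subr0 subrK.
by rewrite mulrBl mul1r mulrDr mulr1 hn addr0 addrK.
Qed.

Lemma Delta_idem_aux g h d : h * g = 0 -> g * h = 0 -> g + h = 1 ->
  in_Delta d -> is_unit (1 - g * d).
Proof.
move=> hhg hgh gh hd.
have ed : g * d + h * d = d by rewrite -mulrDl gh mul1r.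
have ed' : h * d + g * d = d by rewrite addrC.
have k1 : (1 - g * d) * (1 - h * d) = (1 - d) + g * d * (h * d).
  by rewrite mulrBl mul1r mulrBr mulr1 zH ed.
have k2 : (1 - h * d) * (1 - g * d) = (1 - d) + h * d * (g * d).
  by rewrite mulrBl mul1r mulrBr mulr1 zH ed'.
apply: (unit_of_prods (w := 1 - h * d)).
  rewrite k1; apply: Delta_unit (Delta1B hd) _.
  have -> : g * d * (h * d) = (1 + g * d * h) * d - d.
    by rewrite mulrDl mul1r addrAC subrr add0r !mulrA.
  apply: (DeltaB _ hd); apply: (Delta_unitl _ hd); apply: unit_sq0.
  by rewrite -!mulrA (mulrA h) hhg mul0r !mulr0.
rewrite k2; apply: Delta_unit (Delta1B hd) _.
have -> : h * d * (g * d) = (1 + h * d * g) * d - d.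
  by rewrite mulrDl mul1r addrAC subrr add0r !mulrA.
apply: (DeltaB _ hd); apply: (Delta_unitl _ hd); apply: unit_sq0.
by rewrite -!mulrA (mulrA g) hgh mul0r !mulr0.
Qed.

Lemma Delta_idem g d : g * g = g -> in_Delta d -> is_unit (1 - g * d).
Proof.
move=> hg; apply: (Delta_idem_aux (h := 1 - g)).
- by rewrite mulrBl mul1r hg subrr.
- by rewrite mulrBr mulr1 hg subrr.
- by rewrite addrC subrK.
Qed.

Lemma Delta_idemM g d : g * g = g -> in_Delta d -> in_Delta (g * d).
Proof.
move=> hg hd v hv; have [v' [h1 h2]] := hv.
have -> : g * d + v = (1 - g * (- (d * v'))) * v.
  by rewrite mulrN opprK mulrDl mul1r -!mulrA h2 mulr1 addrC.
apply: unitM _ hv; apply: Delta_idem hg _.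
apply: DeltaN; apply: Delta_unitr hd; exact: unitV h1 h2.
Qed.

Lemma jac_of_Delta x : (forall r, in_Delta (r * x)) -> in_jacobson x.
Proof. by move=> h r; apply: Delta1B. Qed.

Lemma trip_split_aux e f : e * e = f -> f * e = e -> e * f = e -> f * f = f ->
  is_unit (1 + (e - f)) /\ e = (1 + (e - f)) - (1 - f).
Proof.
move=> ee fe ef ff.
have kk : (e - f) * (e - f) = - ((e - f) + (e - f)).
  by rewrite [RHS]opprD mulrBl !mulrBr ee fe ef ff !opprB.
have uu : (1 + (e - f)) * (1 + (e - f)) = 1.
  rewrite mulrDl mul1r mulrDr mulr1 kk opprD [(e - f) + (_ + _)]addrA.
  by rewrite subrr add0r addrK.
split; first by exists (1 + (e - f)).
by rewrite opprB !addrA subrK [1 + e]addrC addrK.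
Qed.

Lemma trip_split e : e ^+ 3 = e ->
  exists u g, is_unit u /\ g * g = g /\ e = u - g.
Proof.
move=> he.
have e3 : e ^+ 3 = e * (e * e) by rewrite !exprS expr0 mulr1.
have fe : (e * e) * e = e by rewrite -mulrA -e3 he.
have ef : e * (e * e) = e by rewrite -e3 he.
have ff : (e * e) * (e * e) = e * e by rewrite -mulrA ef.
have [hu he'] := trip_split_aux erefl fe ef ff.
exists (1 + (e - e * e)), (1 - e * e); split; [exact: hu | split; last exact: he'].
by rewrite mulrBl mul1r mulrBr mulr1 ff subrr subr0.
Qed.
End Jac.

Lemma DT_Delta_jac (R : pzRingType) : DT_ring R ->
  forall d : R, in_Delta d -> in_jacobson d.
Proof.
move=> H d hd; apply: jac_of_Delta => r.
have [e [d' [he [hd' ->]]]] := H r.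
rewrite mulrDl; apply: DeltaD; last exact: DeltaM hd' hd.
have [u [g [hu [hg ->]]]] := trip_split he.
rewrite mulrBl; apply: DeltaB; first exact: Delta_unitl hu hd.
exact: Delta_idemM hg hd.
Qed.

Lemma DT_semi (R : pzRingType) : DT_ring R -> semi_tripotent R.
Proof.
move=> H r; have [e [d [he [hd ->]]]] := H r.
by exists e, d; split => //; split => //; apply: DT_Delta_jac.
Qed.

Lemma semi_DT (R : pzRingType) : semi_tripotent R -> DT_ring R.
Proof.
move=> H r; have [e [j [he [hj ->]]]] := H r.
by exists e, j; split => //; split => //; apply: jac_Delta.
Qed.

Lemma semi_sq (R : pzRingType) : semi_tripotent R -> sq_idem_plus_J R.
Proof.
move=> H a; have [e [j [he [hj ->]]]] := H a.
exists (e * e), (e * j + j * (e + j)); split; last split.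
- have e3 : e ^+ 3 = e * (e * e) by rewrite !exprS expr0 mulr1.
  by rewrite /Defs.idempotent -mulrA -e3 he.
- by apply: jacD; [apply: jacMl | apply: jacMr].
- by rewrite expr2 mulrDl [e * (e + j)]mulrDr addrA.
Qed.
Section Lift.
Variable R : pzRingType.
Implicit Types e f g v : R.

Lemma orth2 e f : e * e = e -> f * f = f -> e * f = 0 ->
  (f - f * e) * (f - f * e) = f - f * e /\ e * (f - f * e) = 0 /\ (f - f * e) * e = 0.
Proof.
move=> ee ff ef; split; last split.
- rewrite mulrBl !mulrBr mulrA ff -(mulrA f e f) ef mulr0.
  by rewrite -!mulrA (mulrA e f e) ef mul0r mulr0 !subr0.
- by rewrite mulrBr mulrA ef mul0r subrr.
- by rewrite mulrBl -mulrA ee subrr.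
Qed.

Lemma trip_orth e f : e * e = e -> f * f = f -> e * f = 0 -> f * e = 0 ->
  (e - f) ^+ 3 = e - f.
Proof.
move=> ee ff ef fe.
have sq : (e - f) * (e - f) = e + f.
  by rewrite mulrBl !mulrBr ee ff ef fe sub0r subr0 opprK.
rewrite !exprS expr0 mulr1 sq mulrBl !mulrDr ee ff ef fe addr0 add0r.
by [].
Qed.

Lemma orth_aux e g v v' : e * e = e -> g * g = g -> v = 1 - e * g ->
  v * v' = 1 -> v' * v = 1 -> in_jacobson (e * g) ->
  let f1 := v * g * v' in
  f1 * f1 = f1 /\ e * f1 = 0 /\ in_jacobson (f1 - g).
Proof.
move=> ee gg Hv h1 h2 hj f1; split; last split.
- have -> : f1 * f1 = v * g * (v' * v) * g * v' by rewrite /f1 !mulrA.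
  by rewrite h2 mulr1 -(mulrA v g g) gg.
- have evg : e * v * g = 0.
    rewrite Hv mulrBr mulr1 mulrA ee mulrBl -(mulrA e g g) gg subrr //.
  by rewrite /f1 !mulrA evg !mul0r.
- have -> : f1 - g = (v * g - g * v) * v'.
    by rewrite /f1 mulrBl -(mulrA g v v') h1 mulr1.
  apply: jacMr.
  have -> : v * g - g * v = g * (e * g) - e * g.
    rewrite Hv mulrBl mulrBr mul1r mulr1 -(mulrA e g g) gg.
    by rewrite opprB addrC addrA subrK.
  by apply: jacB => //; apply: jacMl.
Qed.

Lemma orth_lift e g : e * e = e -> g * g = g -> in_jacobson (e * g) ->
  exists f, [/\ f * f = f, e * f = 0, f * e = 0 & in_jacobson (f - (g - g * e))].
Proof.
move=> ee gg hj.
have hv : is_unit (1 - e * g) by have := hj 1; rewrite mul1r.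
have [v' [h1 h2]] := hv.
have [f1f1 [ef1 hf1]] := orth_aux (v' := v') ee gg erefl h1 h2 hj.
set f1 := (1 - e * g) * g * v' in f1f1 ef1 hf1.
have [f2f2 [ef2 f2e]] := orth2 ee f1f1 ef1.
exists (f1 - f1 * e); split => //.
have -> : f1 - f1 * e - (g - g * e) = (f1 - g) - (f1 - g) * e.
  by rewrite mulrBl opprB [g * e - g]addrC opprD opprK !addrA -[f1 - f1 * e - g]addrAC.
by apply: jacB => //; apply: jacMr.
Qed.
End Lift.

Section Quot.
Variable R : pzRingType.

Definition jb (x : R) : bool :=
  if excluded_middle_informative (in_jacobson x) then true else false.

Lemma jbP x : reflect (in_jacobson x) (jb x).
Proof. by rewrite /jb; case: excluded_middle_informative => h; constructor. Qed.

Definition Jp : {pred R} := fun x => jb x.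

Lemma inJp x : (x \in Jp) = jb x. Proof. by []. Qed.

Fact Jp_zmod : zmod_closed Jp.
Proof.
split; first by apply/jbP; exact: jac0.
by move=> x y /jbP hx /jbP hy; apply/jbP; apply: jacD hx (jacN hy).
Qed.
HB.instance Definition _ := GRing.isZmodClosed.Build R Jp Jp_zmod.

Definition Q := Quotient.quot Jp.
Definition qone : Q := \pi_Q 1.
Definition qmul := lift_op2 Q *%R.

Lemma pi_eq x y : (\pi_Q x = \pi_Q y) <-> in_jacobson (x - y).
Proof.
split; first by move/eqP; rewrite piE Quotient.equivE inJp => /jbP.
by move=> h; apply/eqP; rewrite piE Quotient.equivE inJp; apply/jbP.
Qed.

Lemma reprJ x : in_jacobson (x - repr (\pi_Q x)).
Proof. by apply/pi_eq; rewrite reprK. Qed.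

Lemma pi_mul : {morph \pi_Q : x y / x * y >-> qmul x y}.
Proof.
move=> x y; unlock qmul; apply/pi_eq.
set x' := repr _; set y' := repr _.
have -> : x * y - x' * y' = (x - x') * y + x' * (y - y').
  by rewrite mulrBl mulrBr addrA subrK.
apply: jacD; [apply: jacMr | apply: jacMl]; exact: reprJ.
Qed.
Canonical pi_mul_morph := PiMorph2 pi_mul.

Lemma pi_add x y : \pi_Q (x + y) = \pi_Q x + \pi_Q y.
Proof. by rewrite !piE. Qed.


Lemma mulqA : associative qmul.
Proof. by move=> x y z; rewrite -[x]reprK -[y]reprK -[z]reprK !piE mulrA. Qed.
Lemma mul1q : left_id qone qmul.
Proof. by move=> x; rewrite -[x]reprK /qone !piE mul1r. Qed.
Lemma mulq1 : right_id qone qmul.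
Proof. by move=> x; rewrite -[x]reprK /qone !piE mulr1. Qed.
Lemma mulqDl : left_distributive qmul +%R.
Proof. by move=> x y z; rewrite -[x]reprK -[y]reprK -[z]reprK !piE mulrDl. Qed.
Lemma mulqDr : right_distributive qmul +%R.
Proof. by move=> x y z; rewrite -[x]reprK -[y]reprK -[z]reprK !piE mulrDr. Qed.

HB.instance Definition _ := GRing.Zmodule.on Q.
HB.instance Definition _ := GRing.Zmodule_isPzRing.Build Q mulqA mul1q mulq1 mulqDl mulqDr.

Definition pi (x : R) : Q := \pi_Q x.
Lemma piM x y : pi (x * y) = pi x * pi y. Proof. exact: pi_mul. Qed.
Lemma piD x y : pi (x + y) = pi x + pi y. Proof. by rewrite /pi !piE. Qed.
Lemma piN x : pi (- x) = - pi x. Proof. by rewrite /pi !piE. Qed.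
Lemma piB x y : pi (x - y) = pi x - pi y. Proof. by rewrite piD piN. Qed.
Lemma pi0 : pi 0 = 0. Proof. by rewrite /pi !piE. Qed.
Lemma pi1 : pi 1 = 1. Proof. by []. Qed.
Lemma piX x n : pi (x ^+ n) = pi x ^+ n.
Proof. by elim: n => [|n IH]; rewrite ?expr0 ?pi1 // !exprS piM IH. Qed.
Lemma piMn x n : pi (x *+ n) = pi x *+ n.
Proof. by elim: n => [|n IH]; rewrite ?mulr0n ?pi0 // !mulrS piD IH. Qed.
Lemma pi_eqJ x y : pi x = pi y <-> in_jacobson (x - y).
Proof. exact: pi_eq. Qed.
Lemma pi_surj (z : Q) : exists x, pi x = z.
Proof. by exists (repr z); rewrite /pi reprK. Qed.

End Quot.

Section Abs.
Variable T : nzRingType.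
Hypothesis H4 : forall z : T, z ^+ 4 = z ^+ 2.
Hypothesis HJ : forall z : T, (forall r, is_unit (1 - r * z)) -> z = 0.

Lemma mu_aux (a c p q b : T) : p = a * c -> q = c * a -> b = a + c + q ->
  a * a = 0 -> c * c = 0 -> a * c * a = a -> c * a * c = c ->
  b ^+ 4 = b ^+ 2 -> p = 0.
Proof.
move=> Hp Hq Hb aa cc aca cac h4.
have pa : p * a = a by rewrite Hp aca.
have pc : p * c = 0 by rewrite Hp -mulrA cc mulr0.
have pq : p * q = 0 by rewrite Hp Hq -mulrA (mulrA c) cc mul0r mulr0.
have ap : a * p = 0 by rewrite Hp mulrA aa mul0r.
have cp : c * p = c by rewrite Hp mulrA cac.
have qp : q * p = 0 by rewrite Hp Hq -mulrA (mulrA a) aa mul0r mulr0.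
have ac : a * c = p by rewrite Hp.
have pp : p * p = p by rewrite {1}Hp -mulrA cp ac.
have aq : a * q = a by rewrite Hq mulrA aca.
have pb : p * b = a by rewrite Hb !mulrDr pa pc pq !addr0.
have bp : b * p = c by rewrite Hb !mulrDl ap cp qp add0r addr0.
have ab : a * b = p + a by rewrite Hb !mulrDr aa ac aq add0r.
have bc : b * c = p + c.
  by rewrite Hb !mulrDl ac cc Hq cac addr0.
have e2 : p * b ^+ 2 * p = p.
  have -> : p * b ^+ 2 * p = (p * b) * (b * p) by rewrite expr2 !mulrA.
  by rewrite pb bp ac.
have e4 : p * b ^+ 4 * p = p + p.
  have -> : p * b ^+ 4 * p = (p * b) * b * (b * (b * p)).
    by rewrite !exprS expr0 mulr1 !mulrA.
  rewrite pb bp ab bc mulrDl !mulrDr pp pc ap ac addr0 add0r //.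
by move: e4; rewrite h4 e2 => e; apply: (addrI p); rewrite addr0 -e.
Qed.

Lemma red_aux (x r y p w : T) : y = r * x -> p = y * y -> w = r * x * r ->
  x * x = 0 -> y * y = 0.
Proof.
move=> Hy Hp Hw xx.
have pp : p * p = p.
  have := H4 y; rewrite !exprS expr0 !mulr1 => h.
  by rewrite Hp -mulrA.
have px : p * x = 0 by rewrite Hp Hy -!mulrA xx !mulr0.
have wx : w * x = p by rewrite Hw Hp Hy !mulrA.
have p1p : (1 - p) * p = 0 by rewrite mulrBl mul1r pp subrr.
have ac : p * w * (1 - p) * (x * p) = p.
  rewrite -mulrA mulrBl mul1r [p * (x * p)]mulrA px mul0r subr0 mulrA.
  by rewrite -(mulrA p w x) wx !pp.
rewrite -Hp; apply: (mu_aux (a := p * w * (1 - p)) (c := x * p) (esym ac) erefl erefl).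
- by rewrite -!mulrA [(1 - p) * (p * _)]mulrA p1p mul0r !mulr0.
- by rewrite -mulrA (mulrA p x p) px mul0r mulr0.
- by rewrite ac !mulrA pp.
- by rewrite -mulrA ac -mulrA pp.
- exact: H4.
Qed.

Lemma red (x : T) : x * x = 0 -> x = 0.
Proof.
move=> xx; apply: HJ => r.
have yy := red_aux erefl erefl erefl xx.
by apply: unit_sq0; rewrite mulrNN; exact: yy.
Qed.

Lemma cfu (z : T) : commr_rmorph (intr : int -> T) z.
Proof. by move=> n; exact: commr_int. Qed.
Local Notation ev z := (horner_morph (cfu z)).
Lemma evX (z : T) : ev z 'X = z. Proof. exact: horner_morphX. Qed.

Lemma evK3 (z : T) (G1 G2 G3 P A1 A2 A3 : {poly int}) :
  ev z G1 = 0 -> ev z G2 = 0 -> ev z G3 = 0 ->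
  P = A1 * G1 + A2 * G2 + A3 * G3 -> ev z P = 0.
Proof. by move=> h1 h2 h3 ->; rewrite !rmorphD !rmorphM /= h1 h2 h3 !mulr0 !addr0. Qed.

Lemma G4 (z : T) : ev z ('X^4 - 'X^2 : {poly int}) = 0.
Proof. by rewrite rmorphB !rmorphXn /= evX H4 subrr. Qed.

Lemma cube (z : T) : z ^+ 3 = z.
Proof.
apply/eqP; rewrite eq_sym -subr_eq0; apply/eqP; apply: red.
have := @evK3 z _ _ _ (('X - 'X^3) * ('X - 'X^3)) ('X^2 - 1) 0 0 (G4 z) (G4 z) (G4 z).
rewrite rmorphM rmorphB rmorphXn /= evX; apply; ring.
Qed.

Lemma G3 (z : T) : ev z ('X^3 - 'X : {poly int}) = 0.
Proof. by rewrite rmorphB !rmorphXn /= evX cube subrr. Qed.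

Lemma six : (6%:R : T) = 0.
Proof.
have h := H4 2%:R; rewrite -!natrX in h.
have h12 : (12%:R : T) = 0.
  by apply: (addIr (4%:R : T)); rewrite -natrD add0r.
apply: red; rewrite -natrM.
by rewrite (_ : (6 * 6 = 3 * 12)%N) // natrM h12 mulr0.
Qed.

Lemma G6 (z : T) : ev z (6%:R : {poly int}) = 0.
Proof. by rewrite rmorph_nat six. Qed.

Lemma three (z : T) : 3%:R * (z ^+ 2 - z) = 0.
Proof.
apply: red.
have := @evK3 z _ _ _ ((3%:R * ('X^2 - 'X)) * (3%:R * ('X^2 - 'X))) 9%:R (-18%:R) (3%:R * ('X^2 - 'X)) (G4 z) (G3 z) (G6 z).
rewrite !rmorphM /= !rmorphB !rmorphXn !rmorph_nat /= evX; apply; ring.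
Qed.

Lemma G33 (z : T) : ev z (3%:R * ('X^2 - 'X) : {poly int}) = 0.
Proof.
by rewrite !(rmorphB, rmorphM, rmorphXn, rmorph_nat) /= evX three.
Qed.

Definition E1 (z : T) := 2%:R * z ^+ 2 - z.
Definition E2 (z : T) := 2%:R * z ^+ 2 - 2%:R * z.

Lemma E1_idem (z : T) : E1 z * E1 z = E1 z.
Proof.
apply/eqP; rewrite -subr_eq0; apply/eqP.
have := @evK3 z _ _ _ ((2%:R * 'X^2 - 'X) * (2%:R * 'X^2 - 'X) - (2%:R * 'X^2 - 'X))
  4%:R (-4%:R) 1 (G4 z) (G3 z) (G33 z).
by rewrite !(rmorphB, rmorphM, rmorphXn, rmorph_nat) /= evX; apply; ring.
Qed.

Lemma E2_idem (z : T) : E2 z * E2 z = E2 z.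
Proof.
apply/eqP; rewrite -subr_eq0; apply/eqP.
have := @evK3 z _ _ _ ((2%:R * 'X^2 - 2%:R * 'X) * (2%:R * 'X^2 - 2%:R * 'X) - (2%:R * 'X^2 - 2%:R * 'X))
  4%:R (-8%:R) ('X^2 - 'X) (G4 z) (G3 z) (G6 z).
by rewrite !(rmorphB, rmorphM, rmorphXn, rmorph_nat) /= evX; apply; ring.
Qed.

Lemma E12 (z : T) : E1 z * E2 z = 0.
Proof.
have := @evK3 z _ _ _ ((2%:R * 'X^2 - 'X) * (2%:R * 'X^2 - 2%:R * 'X))
  4%:R (-6%:R) ('X^2 - 'X) (G4 z) (G3 z) (G6 z).
by rewrite !(rmorphB, rmorphM, rmorphXn, rmorph_nat) /= evX; apply; ring.
Qed.

Lemma E21 (z : T) : E2 z * E1 z = 0.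
Proof.
have := @evK3 z _ _ _ ((2%:R * 'X^2 - 2%:R * 'X) * (2%:R * 'X^2 - 'X))
  4%:R (-6%:R) ('X^2 - 'X) (G4 z) (G3 z) (G6 z).
by rewrite !(rmorphB, rmorphM, rmorphXn, rmorph_nat) /= evX; apply; ring.
Qed.

Lemma E1E2 (z : T) : E1 z - E2 z = z.
Proof.
apply/eqP; rewrite -subr_eq0; apply/eqP.
have := @evK3 z _ _ _ ((2%:R * 'X^2 - 'X) - (2%:R * 'X^2 - 2%:R * 'X) - 'X)
  0 0 0 (G4 z) (G3 z) (G6 z).
by rewrite !(rmorphB, rmorphM, rmorphXn, rmorph_nat) /= evX; apply; ring.
Qed.
End Abs.

Definition Qnz (R : pzRingType) (h : (1 : R) != 0) := Q R.
HB.instance Definition _ (R : pzRingType) (h : (1 : R) != 0) := GRing.PzRing.on (Qnz h).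

Lemma q1nz (R : pzRingType) (h : (1 : R) != 0) : (1 : Qnz h) != 0.
Proof.
apply/eqP => e.
have : pi (1 : R) = pi 0 by rewrite pi1 pi0; exact: e.
move/pi_eqJ; rewrite subr0 => /(_ 1) [y [hy _]].
by move: hy; rewrite mulr1 subrr mul0r => /esym; apply/eqP.
Qed.
HB.instance Definition _ (R : pzRingType) (h : (1 : R) != 0) :=
  GRing.PzSemiRing_isNonZero.Build (Qnz h) (q1nz h).

Lemma sq_semi (R : pzRingType) : sq_idem_plus_J R -> semi_tripotent R.
Proof.
move=> H; case: (eqVneq (1 : R) 0) => [h10 r | hnz].
  exists 0, 0; split; first by rewrite /tripotent expr0n.
  split; first exact: jac0.
  by rewrite addr0 -[r]mulr1 h10 mulr0.
pose T := Qnz hnz.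
have pe : forall x e j : R, x ^+ 2 = e + j -> in_jacobson j -> pi (x ^+ 2) = pi e.
  move=> x e j hx hj; apply/pi_eqJ; rewrite hx [e + j]addrC addrK; exact: hj.
have H4T : forall z : T, z ^+ 4 = z ^+ 2.
  move=> z; have [x <-] := pi_surj z.
  have [e [j [he [hj hx]]]] := H x.
  have -> : (pi x : T) ^+ 4 = (pi x ^+ 2) ^+ 2 by rewrite -exprM.
  rewrite -piX (pe _ _ _ hx hj) expr2 -piM.
  by move: he; rewrite /Defs.idempotent => ->.
have HJT : forall z : T, (forall r : T, is_unit (1 - r * z)) -> z = 0.
  move=> z hz; have [x ex] := pi_surj z; subst z.
  have hx : in_jacobson x.
    move=> s; have [w' [h1 h2]] := hz (pi s); have [w ew] := pi_surj w'.
    rewrite -ew -pi1 -piM -piB -piM in h1 h2.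
    apply: (unit_of_prods (w := w)).
      have -> : (1 - s * x) * w = 1 + ((1 - s * x) * w - 1) by rewrite [RHS]addrC subrK.
      apply: unit_plus_jac; [exact: unit1 | apply/pi_eqJ; exact: h1].
    have -> : w * (1 - s * x) = 1 + (w * (1 - s * x) - 1) by rewrite [RHS]addrC subrK.
    apply: unit_plus_jac; [exact: unit1 | apply/pi_eqJ; rewrite piM; exact: h2].
  by rewrite -pi0; apply/pi_eqJ; rewrite subr0.
have lift : forall eb : T, eb * eb = eb -> exists e : R, e * e = e /\ pi e = eb.
  move=> eb hb; have [u eu] := pi_surj eb; subst eb.
  have [e [j [he [hj hu]]]] := H u.
  exists e; split; first exact: he.
  by rewrite -(pe _ _ _ hu hj) piX expr2 hb.
move=> a; pose z : T := pi a.
have [e1 [e1e1 pe1]] := lift (E1 z) (E1_idem H4T HJT z).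
have [g [gg pg]] := lift (E2 z) (E2_idem H4T HJT z).
have hj : in_jacobson (e1 * g).
  rewrite -[e1 * g]subr0; apply/pi_eqJ; rewrite piM pe1 pg pi0.
  exact: (E12 H4T HJT z).
have [f [ff e1f fe1 hf]] := orth_lift e1e1 gg hj.
exists (e1 - f), (a - (e1 - f)); split; first exact: trip_orth.
split; last by rewrite addrC subrK.
apply/pi_eqJ; rewrite piB pe1.
have -> : pi f = pi (g - g * e1) by apply/pi_eqJ.
rewrite piB piM pe1 pg (E21 H4T HJT z) subr0.
by rewrite (E1E2 H4T HJT z).
Qed.

Theorem theorem4p11 (R : pzRingType) :
  (DT_ring R <-> semi_tripotent R) /\ (semi_tripotent R <-> sq_idem_plus_J R).
Proof.
split; split.
- exact: DT_semi.
- exact: semi_DT.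
- exact: semi_sq.
- exact: sq_semi.
Qed.
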